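(* Let $E$ be an Archimedean vector lattice equipped with a completely metrizable locally solid (linear) topology. Then every disjoint system of positive vectors of $E$ is countable if and only if $E$ has a weak unit and the countable sup property.
   Context: A locally solid vector lattice is a vector lattice with a linear topology having a base of zero neighborhoods consisting of solid sets. A disjoint system of positive vectors is a set of vectors $x\ge 0$ that are pairwise disjoint. A vector $e\ge 0$ is a weak unit if $|x|\wedge e=0$ implies $x=0$. A vector lattice has the countable sup property if every nonempty subset possessing a supremum contains a countable subset with the same supremum. *)

(* Defs.v *)
From HB Require Import structures.
From mathcomp Require Import all_boot all_order all_algebra.
From mathcomp Require Import all_classical all_reals all_analysis.
Set Implicit Arguments. Unset Strict Implicit. Unset Printing Implicit Defensive.
Import Order.TTheory GRing.Theory Num.Theory.
Local Open Scope classical_set_scope.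
Local Open Scope ring_scope.

Record vector_lattice (R : realType) (E : lmodType R) := VectorLattice {
  vle : E -> E -> Prop;
  vle_refl : forall x, vle x x;
  vle_antisym : forall x y, vle x y -> vle y x -> x = y;
  vle_trans : forall x y z, vle x y -> vle y z -> vle x z;
  vle_add : forall x y z, vle x y -> vle (x + z) (y + z);
  vle_scale : forall (a : R) x y, 0 <= a -> vle x y -> vle (a *: x) (a *: y);
  vjoin : E -> E -> E;
  vjoin_ubl : forall x y, vle x (vjoin x y);
  vjoin_ubr : forall x y, vle y (vjoin x y);
  vjoin_least : forall x y z, vle x z -> vle y z -> vle (vjoin x y) z
}.

Section VL.
Variables (R : realType) (E : lmodType R) (L : vector_lattice E).

Definition vmeet (x y : E) : E := - vjoin L (- x) (- y).
Definition vabs (x : E) : E := vjoin L x (- x).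

Definition is_sup (A : set E) (s : E) : Prop :=
  (forall a, A a -> vle L a s) /\
  (forall u, (forall a, A a -> vle L a u) -> vle L s u).

Definition archimedean_vl : Prop :=
  forall x y : E, vle L 0 x -> (forall n : nat, vle L (x *+ n) y) -> x = 0.

Definition solid (V : set E) : Prop :=
  forall x y, V y -> vle L (vabs x) (vabs y) -> V x.

Definition disjoint_system (D : set E) : Prop :=
  (forall x, D x -> vle L 0 x) /\
  (forall x y, D x -> D y -> x <> y -> vmeet x y = 0).

Definition weak_unit (e : E) : Prop :=
  vle L 0 e /\ forall x, vmeet (vabs x) e = 0 -> x = 0.

Definition countable_sup_property : Prop :=
  forall A : set E, A !=set0 -> forall s, is_sup A s ->
    exists B : set E, B `<=` A /\ countable B /\ is_sup B s.
End VL.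

Definition locally_solid (R : realType) (E : topologicalLmodType R)
  (L : vector_lattice E) : Prop :=
  forall U : set E, nbhs (0 : E) U ->
    exists V : set E, nbhs (0 : E) V /\ solid L V /\ V `<=` U.

Definition completely_metrizable (R : realType) (T : topologicalType) : Prop :=
  exists d : T -> T -> R,
    (forall x y, 0 <= d x y) /\
    (forall x y, d x y = 0 <-> x = y) /\
    (forall x y, d x y = d y x) /\
    (forall x y z, d x z <= d x y + d y z) /\
    (forall (x : T) (A : set T),
        nbhs x A <-> exists2 e : R, 0 < e & [set y | d x y < e] `<=` A) /\
    (forall u : nat -> T,
        (forall e : R, 0 < e -> exists N : nat, forall m n : nat,
            (N <= m)%N -> (N <= n)%N -> d (u m) (u n) < e) ->
        exists l : T, u @ \oo --> l).

(* Main.v *)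
Require Import Defs.
From HB Require Import structures.
From mathcomp Require Import all_boot all_order all_algebra.
From mathcomp Require Import all_classical all_reals all_analysis.
From mathcomp Require Import lra.
Set Implicit Arguments. Unset Strict Implicit. Unset Printing Implicit Defensive.
Import Order.TTheory GRing.Theory Num.Theory.
Local Open Scope classical_set_scope.
Local Open Scope ring_scope.

Section Riesz.
Variables (R : realType) (E : lmodType R) (L : vector_lattice E).
Local Notation "x <=: y" := (vle L x y) (at level 70).
Local Notation jn := (vjoin L).
Local Notation mt := (vmeet L).
Definition pp (x : E) := jn x 0.

Lemma vrefl x : x <=: x. Proof. exact: vle_refl. Qed.
Lemma vtrans y x z : x <=: y -> y <=: z -> x <=: z.
Proof. exact: vle_trans. Qed.
Lemma vanti x y : x <=: y -> y <=: x -> x = y. Proof. exact: vle_antisym. Qed.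
Lemma vaddr z x y : x <=: y -> x + z <=: y + z. Proof. exact: vle_add. Qed.
Lemma vaddl z x y : x <=: y -> z + x <=: z + y.
Proof. by move=> h; rewrite ![z + _]addrC; apply: vaddr. Qed.
Lemma vsub0 x y : x <=: y -> 0 <=: y - x.
Proof. by move=> h; have := vaddr (- x) h; rewrite subrr. Qed.
Lemma vsub0' x y : 0 <=: y - x -> x <=: y.
Proof. by move=> h; have := vaddr x h; rewrite add0r subrK. Qed.
Lemma vadd2 x y z w : x <=: y -> z <=: w -> x + z <=: y + w.
Proof. by move=> h1 h2; apply: (vtrans (vaddr z h1)); apply: vaddl. Qed.
Lemma vopp x y : x <=: y -> - y <=: - x.
Proof.
move=> h; have := vaddr (- x - y) h.
by rewrite addrA subrr add0r addrCA subrr addr0.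
Qed.
Lemma vaddpos x p : 0 <=: p -> x <=: x + p.
Proof. by move=> h; have := vaddl x h; rewrite addr0. Qed.
Lemma vadd_ge0 p q : 0 <=: p -> 0 <=: q -> 0 <=: p + q.
Proof. by move=> h1 h2; have := vadd2 h1 h2; rewrite addr0. Qed.
Lemma vscale c x y : 0 <= c -> x <=: y -> c *: x <=: c *: y.
Proof. exact: vle_scale. Qed.
Lemma vscale_ge0 c x : 0 <= c -> 0 <=: x -> 0 <=: c *: x.
Proof. by move=> c0 h; have := vscale c0 h; rewrite scaler0. Qed.
Lemma vnatmul x y n : x <=: y -> x *+ n <=: y *+ n.
Proof.
move=> h; elim: n => [|n IH]; first by rewrite !mulr0n; apply: vrefl.
by rewrite !mulrS; apply: vadd2.
Qed.
Lemma vnatmul_ge0 x n : 0 <=: x -> 0 <=: x *+ n.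
Proof. by move=> h; have := vnatmul n h; rewrite mul0rn. Qed.
Lemma vnatmulS x n : 0 <=: x -> x *+ n <=: x *+ n.+1.
Proof. by move=> h; rewrite mulrS addrC; apply: vaddpos. Qed.

Lemma jn_ubl x y : x <=: jn x y. Proof. exact: vjoin_ubl. Qed.
Lemma jn_ubr x y : y <=: jn x y. Proof. exact: vjoin_ubr. Qed.
Lemma jn_least x y z : x <=: z -> y <=: z -> jn x y <=: z.
Proof. exact: vjoin_least. Qed.
Lemma jnC x y : jn x y = jn y x.
Proof. by apply: vanti; apply: jn_least; [apply: jn_ubr|apply: jn_ubl|apply: jn_ubr|apply: jn_ubl]. Qed.
Lemma jn_idl x y : x <=: y -> jn x y = y.
Proof. by move=> h; apply: vanti; [apply: jn_least => //; apply: vrefl|apply: jn_ubr]. Qed.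
Lemma jn_mono x x' y y' : x <=: x' -> y <=: y' -> jn x y <=: jn x' y'.
Proof.
move=> h1 h2; apply: jn_least.
  exact: vtrans h1 (jn_ubl _ _).
exact: vtrans h2 (jn_ubr _ _).
Qed.
Lemma jn_add x y z : jn x y + z = jn (x + z) (y + z).
Proof.
apply: vanti; last by apply: jn_least; apply: vaddr; [apply: jn_ubl|apply: jn_ubr].
have h : jn x y <=: jn (x + z) (y + z) - z.
  apply: jn_least.
    by have := vaddr (- z) (jn_ubl (x + z) (y + z)); rewrite addrK.
  by have := vaddr (- z) (jn_ubr (x + z) (y + z)); rewrite addrK.
by have := vaddr z h; rewrite subrK.
Qed.

Lemma mtE x y : mt x y = - jn (- x) (- y). Proof. by []. Qed.
Lemma mt_lbl x y : mt x y <=: x.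
Proof. by rewrite mtE -{2}(opprK x); apply: vopp; apply: jn_ubl. Qed.
Lemma mt_lbr x y : mt x y <=: y.
Proof. by rewrite mtE -{2}(opprK y); apply: vopp; apply: jn_ubr. Qed.
Lemma mt_greatest x y z : z <=: x -> z <=: y -> z <=: mt x y.
Proof.
move=> h1 h2; rewrite mtE -(opprK z); apply: vopp.
by apply: jn_least; apply: vopp.
Qed.
Lemma mtC x y : mt x y = mt y x.
Proof. by rewrite !mtE jnC. Qed.
Lemma mt_idl x y : x <=: y -> mt x y = x.
Proof. by move=> h; apply: vanti; [apply: mt_lbl|apply: mt_greatest => //; apply: vrefl]. Qed.
Lemma mt_mono x x' y y' : x <=: x' -> y <=: y' -> mt x y <=: mt x' y'.
Proof.
move=> h1 h2; apply: mt_greatest.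
  exact: vtrans (mt_lbl _ _) h1.
exact: vtrans (mt_lbr _ _) h2.
Qed.
Lemma mt_add x y z : mt x y + z = mt (x + z) (y + z).
Proof.
by rewrite !mtE -{1}[z]opprK -opprD jn_add !opprD.
Qed.
Lemma mt_ge0 x y : 0 <=: x -> 0 <=: y -> 0 <=: mt x y.
Proof. exact: mt_greatest. Qed.
Lemma add_jn_mt x y : jn x y + mt x y = x + y.
Proof.
have h : jn (- x) (- y) + (x + y) = jn y x.
  by rewrite jn_add addrA addNr add0r addrCA addNr addr0.
have h2 : jn (- x) (- y) = jn x y - (x + y) by rewrite (jnC x y) -h addrK.
by rewrite mtE h2 opprB addrC subrK.
Qed.

Lemma scale_jn c x y : 0 < c -> c *: jn x y = jn (c *: x) (c *: y).
Proof.
move=> c0; apply: vanti; last first.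
  by apply: jn_least; apply: vscale; rewrite ?ltW //; [apply: jn_ubl|apply: jn_ubr].
have ci : 0 <= c^-1 by rewrite invr_ge0 ltW.
have h : jn x y <=: c^-1 *: jn (c *: x) (c *: y).
  apply: jn_least.
    by rewrite -[x in x <=: _](scalerK (lt0r_neq0 c0)); apply: vscale => //; apply: jn_ubl.
  by rewrite -[y in y <=: _](scalerK (lt0r_neq0 c0)); apply: vscale => //; apply: jn_ubr.
have := vscale (ltW c0) h; rewrite scalerA mulfV ?scale1r //; exact: lt0r_neq0.
Qed.
Lemma scale_mt c x y : 0 < c -> c *: mt x y = mt (c *: x) (c *: y).
Proof. by move=> c0; rewrite !mtE scalerN scale_jn // !scalerN. Qed.

Lemma pp_ge0 x : 0 <=: pp x. Proof. exact: jn_ubr. Qed.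
Lemma pp_ge x : x <=: pp x. Proof. exact: jn_ubl. Qed.
Lemma pp_least x z : x <=: z -> 0 <=: z -> pp x <=: z.
Proof. exact: jn_least. Qed.
Lemma pp_mono x y : x <=: y -> pp x <=: pp y.
Proof. by move=> h; apply: jn_mono => //; apply: vrefl. Qed.
Lemma pp_id x : 0 <=: x -> pp x = x.
Proof. by move=> h; rewrite /pp jnC jn_idl. Qed.
Lemma pp_le0 x : x <=: 0 -> pp x = 0.
Proof. by move=> h; rewrite /pp jn_idl. Qed.
Lemma ppN x : pp (- x) = pp x - x.
Proof. by rewrite /pp jn_add subrr add0r jnC. Qed.
Lemma pp_disj x : mt (pp x) (pp (- x)) = 0.
Proof.
rewrite ppN -[X in mt X _]add0r [pp x - x]addrC -mt_add.
have -> : mt 0 (- x) = - pp x by rewrite mtE oppr0 opprK /pp jnC.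
by rewrite addNr.
Qed.
Lemma pp_add x y : pp (x + y) <=: pp x + pp y.
Proof. by apply: pp_least; [apply: vadd2; apply: pp_ge|apply: vadd_ge0; apply: pp_ge0]. Qed.

Lemma disj_sum p q : mt p q = 0 -> p + q = jn p q.
Proof. by move=> h; rewrite -add_jn_mt h addr0. Qed.
Lemma mt_sub_add p q r : 0 <=: p -> 0 <=: q -> 0 <=: r ->
  mt (p + q) r <=: mt p r + mt q r.
Proof.
move=> hp hq hr.
rewrite [mt p r + _]addrC mt_add.
apply: mt_greatest.
  rewrite [q + _]addrC mt_add; apply: mt_greatest; first exact: mt_lbl.
  by apply: vtrans (mt_lbr _ _) _; apply: vaddpos.
rewrite [r + mt p r]addrC mt_add; apply: mt_greatest.
  by apply: vtrans (mt_lbr _ _) _; rewrite addrC; apply: vaddpos.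
by apply: vtrans (mt_lbr _ _) _; apply: vaddpos.
Qed.
Lemma disj_mono p q r : 0 <=: p -> 0 <=: r -> r <=: q -> mt p q = 0 -> mt p r = 0.
Proof.
move=> hp hr hrq h; apply: vanti; last exact: mt_ge0.
by rewrite -h; apply: mt_mono => //; apply: vrefl.
Qed.
Lemma disj_natmul p q n : 0 <=: p -> 0 <=: q -> mt p q = 0 -> mt p (q *+ n) = 0.
Proof.
move=> hp hq h; elim: n => [|n IH].
  by rewrite mulr0n mtC mt_idl.
apply: vanti; last by apply: mt_ge0 => //; apply: vnatmul_ge0.
rewrite mulrS mtC; apply: vtrans (mt_sub_add _ _ _) _ => //.
- by apply: vnatmul_ge0.
- by rewrite mtC h mtC IH addr0; apply: vrefl.
Qed.
Lemma disj_scale p q c : 0 <=: p -> 0 <=: q -> 0 < c -> mt p q = 0 -> mt p (c *: q) = 0.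
Proof.
move=> hp hq c0 h; have [c1|c1] := lerP c 1.
  apply: (disj_mono hp _ _ h); first by apply: vscale_ge0 => //; apply: ltW.
  apply: vsub0'; rewrite -{1}(scale1r q) -scalerBl; apply: vscale_ge0 => //.
  by rewrite subr_ge0.
apply: vanti; last by apply: mt_ge0 => //; apply: vscale_ge0 => //; apply: ltW.
have -> : 0 = c *: mt p q by rewrite h scaler0.
rewrite scale_mt //; apply: mt_mono; last exact: vrefl.
apply: vsub0'; rewrite -{2}(scale1r p) -scalerBl; apply: vscale_ge0 => //.
by rewrite subr_ge0 ltW.
Qed.

Lemma abs_ge x : x <=: vabs L x. Proof. exact: jn_ubl. Qed.
Lemma abs_geN x : - x <=: vabs L x. Proof. exact: jn_ubr. Qed.
Lemma abs_ge0 x : 0 <=: vabs L x.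
Proof.
have h := vadd2 (abs_ge x) (abs_geN x); rewrite subrr in h.
have e2 : vabs L x + vabs L x = (2 : R) *: vabs L x by rewrite scaler_nat mulr2n.
have c0 : (0 : R) <= 2^-1 by rewrite invr_ge0 ler0n.
by have := vscale c0 h; rewrite scaler0 e2 scalerA mulVf ?scale1r.
Qed.
Lemma abs_id x : 0 <=: x -> vabs L x = x.
Proof.
move=> h; rewrite /vabs jnC jn_idl //.
apply: (vtrans (y:=0)) => //; rewrite -[X in _ <=: X]oppr0; exact: vopp.
Qed.
Lemma abs_eq0 x : vabs L x = 0 -> x = 0.
Proof.
move=> h; apply: vanti; first by rewrite -h; apply: abs_ge.
by have := abs_geN x; rewrite h => /vopp; rewrite opprK oppr0.
Qed.

Lemma sub_mt e y : e - mt e y = pp (e - y).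
Proof. by rewrite mtE opprK addrC jn_add addNr /pp jnC addrC. Qed.

Lemma keyL e x n : 0 <=: e -> 0 <=: x ->
  mt (pp (e - x *+ n)) x *+ n.+1 <=: e.
Proof.
move=> he hx; set y := pp (e - x *+ n); set w := mt y x.
have hy : 0 <=: y by apply: pp_ge0.
have hw : 0 <=: w by apply: mt_ge0.
have h1 : w *+ n.+1 <=: e + pp (x *+ n - e).
  rewrite mulrS.
  have -> : e + pp (x *+ n - e) = y + x *+ n.
    by rewrite addrC /y /pp !jn_add !add0r !subrK jnC.
  by apply: vadd2; [apply: mt_lbl|apply: vnatmul; apply: mt_lbr].
have h2 : w *+ n.+1 <=: y *+ n.+1 by apply: vnatmul; apply: mt_lbl.
apply: vtrans (mt_greatest h1 h2) _.
apply: vtrans (mt_sub_add _ _ _) _ => //; [exact: pp_ge0|exact: vnatmul_ge0|].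
have -> : mt (pp (x *+ n - e)) (y *+ n.+1) = 0.
  apply: disj_natmul => //; first exact: pp_ge0.
  by rewrite /y -[e - x *+ n]opprB pp_disj.
by rewrite addr0; apply: mt_lbl.
Qed.

Lemma max_disj (P : set E) : exists D, disjoint_system L D /\ D `<=` P /\
  (forall w, P w -> 0 <=: w -> (forall d, D d -> mt w d = 0) -> w = 0).
Proof.
pose Q := [set D : set E | disjoint_system L D /\ D `<=` P].
have [|A [[[Apos Adisj] AP] Amax]] := @Zorn_bigcup E Q.
  move=> F FQ Ftot; split; last by move=> x [X /FQ [_ XP] /XP].
  split; first by move=> x [X /FQ [[XP _] _] /XP].
  move=> x y [X FX Xx] [Y FY Yy] xy.
  have [XY|YX] := Ftot X Y FX FY.
    by have [[_ hY] _] := FQ Y FY; apply: hY => //; apply: XY.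
  by have [[_ hX] _] := FQ X FX; apply: hX => //; apply: YX.
exists A; split; first by split.
split => // w Pw w0 hw.
have [Aw|nAw] := pselect (A w).
  by rewrite -(mt_idl (vrefl w)); apply: hw.
exfalso; apply: (Amax (A `|` [set w])).
  split; first by move=> x Ax; left.
  by move=> /(_ w (or_intror erefl)).
split; last by move=> x [/AP|->].
split; first by move=> x [/Apos|->].
move=> x y [Ax|->] [Ay|->] xy.
- exact: Adisj.
- by rewrite mtC; apply: hw.
- exact: hw.
- by [].
Qed.

Lemma vle0_sub x y : x - y <=: 0 -> x <=: y.
Proof. by move=> h; have := vaddr y h; rewrite subrK add0r. Qed.

Lemma dir_back (arch : archimedean_vl L) e (we : weak_unit L e)
  (csp : countable_sup_property L) D (hD : disjoint_system L D) : countable D.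
Proof.
have [e0 wu] := we; have [Dpos Ddisj] := hD.
pose A := [set b | (exists d, D d /\ exists n, b = mt e (d *+ n)) \/
  (exists x, 0 <=: x /\ (forall d, D d -> mt x d = 0) /\ b = mt e x)].
have A0 : A 0.
  right; exists 0; split; first exact: vrefl.
  split; first by move=> d /Dpos d0; rewrite mt_idl.
  by rewrite mtC mt_idl.
have Ale b : A b -> b <=: e by case=> [[d [_ [n ->]]]|[x [_ [_ ->]]]]; apply: mt_lbl.
have Age0 b : A b -> 0 <=: b.
  case=> [[d [Dd [n ->]]]|[x [x0 [_ ->]]]]; apply: mt_ge0 => //.
  by apply: vnatmul_ge0; apply: Dpos.
have supA : is_sup L A e.
  split; first exact: Ale.
  move=> u ub; have u0 := ub _ A0.
  have claim x : 0 <=: x -> (forall n, mt e (x *+ n) <=: u) -> mt (pp (e - u)) x = 0.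
    move=> x0 hx; apply: (arch _ e); first by apply: mt_ge0 => //; apply: pp_ge0.
    move=> n; apply: vtrans (vnatmulS _ _) _; first by apply: mt_ge0 => //; apply: pp_ge0.
    apply: vtrans (keyL n e0 x0); apply: vnatmul; apply: mt_mono; last exact: vrefl.
    apply: pp_least; last exact: pp_ge0.
    by rewrite -sub_mt; apply: vaddl; apply: vopp.
  have vD d : D d -> mt (pp (e - u)) d = 0.
    by move=> Dd; apply: claim; [apply: Dpos|move=> n; apply: ub; left; exists d; split => //; exists n].
  have v0 : pp (e - u) = 0.
    rewrite -[LHS](mt_idl (vrefl (pp (e - u)))); apply: claim; first exact: pp_ge0.
    move=> n; apply: ub; right; exists (pp (e - u) *+ n); split; first by apply: vnatmul_ge0; apply: pp_ge0.
    split => // d Dd; rewrite mtC; apply: disj_natmul; [exact: Dpos|exact: pp_ge0|].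
    by rewrite mtC; apply: vD.
  by apply: vle0_sub; rewrite -v0; apply: pp_ge.
have [B [BA [cB supB]]] := csp A (ex_intro _ 0 A0) e supA.
pose g (b : E) : E := match pselect (exists d, D d /\ exists n, b = mt e (d *+ n)) with
  | left h => projT1 (cid h) | right _ => 0 end.
have subD : D `<=` (g @` B) `|` [set 0].
  move=> d Dd; have [gd|ngd] := pselect ((g @` B) d); first by left.
  right; apply: (wu d); rewrite abs_id; last exact: Dpos.
  have d0 := Dpos _ Dd.
  have dB b : B b -> mt d b = 0.
    move=> Bb.
    case: (pselect (exists d, D d /\ exists n, b = mt e (d *+ n))) => [h|nh].
      have := projT2 (cid h); set d' := projT1 (cid h); move=> [Dd' [n bE]].
      have dd' : d <> d'.
        move=> dE; apply: ngd; exists b => //; rewrite /g.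
        case: pselect => [h'|//]; rewrite dE /d'; congr (projT1 (cid _)); apply: Prop_irrelevance.
      apply: (disj_mono (q := d' *+ n)) => //; first exact: Age0 (BA _ Bb).
        by rewrite bE; apply: mt_lbr.
      by apply: disj_natmul => //; [exact: Dpos|exact: Ddisj].
    have [[d' [Dd' [n bE]]]|[x [x0 [xD bE]]]] := BA _ Bb.
      by exfalso; apply: nh; exists d'; split => //; exists n.
    apply: (disj_mono (q := x)) => //; first exact: Age0 (BA _ Bb).
      by rewrite bE; apply: mt_lbr.
    by rewrite mtC; apply: xD.
  set m := mt d e.
  have m0 : 0 <=: m by apply: mt_ge0.
  have ub : forall b, B b -> b <=: e - m.
    move=> b Bb; have b0 := Age0 _ (BA _ Bb).
    have hbm : mt b m = 0.
      apply: (disj_mono (q := d)) => //; first exact: mt_lbl.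
      by rewrite mtC; apply: dB.
    have : b + m <=: e.
      by rewrite disj_sum //; apply: jn_least; [apply: Ale; apply: BA|apply: mt_lbr].
    by move=> /(vaddr (- m)); rewrite addrK.
  have := supB.2 _ ub => /(vaddr (m - e)).
  rewrite addrCA subrr addr0 addrA subrK subrr => hm.
  by apply: vanti.
apply: (sub_countable (subset_card_le subD)).
have cU (X Y : set E) : countable X -> countable Y -> countable (X `|` Y).
  move=> cX cY.
  have -> : X `|` Y = \bigcup_(i in [set: bool]) (if i then X else Y).
    apply/seteqP; split => [z [Xz|Yz]|z [[] _ ?]]; [by exists true|by exists false|by left|by right].
  by apply: bigcup_countable => // -[].
apply: cU => //; exact: (sub_countable (card_image_le g B)).
Qed.

Lemma thr_step (a0 h : E) k : a0 + h *+ k.+1 = (a0 + h *+ k) + h.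
Proof. by rewrite mulrSr addrA. Qed.

Lemma alg1 (a t h u : E) : (a - (t + h)) + (t - u) = a - u - h.
Proof. by rewrite [t + h]addrC opprD addrA addrA subrK addrAC. Qed.

Lemma dir_csp (arch : archimedean_vl L)
  (ccc : forall D, disjoint_system L D -> countable D) : countable_sup_property L.
Proof.
move=> A [a0 Aa0] s [sub sl].
have sa0 : 0 <=: s - a0 by apply: vsub0; apply: sub.
pose hh (n : nat) : E := (n.+1%:R)^-1 *: (s - a0).
have hh0 n : 0 <=: hh n by apply: vscale_ge0 => //; rewrite invr_ge0 ler0n.
pose thr (p : nat * nat) : E := a0 + hh p.2 *+ p.1.
pose P (p : nat * nat) := [set w | 0 <=: w /\ exists a, A a /\ w <=: pp (a - thr p)].
have [Dp hDp] := choice (fun p => max_disj (P p)).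
have hA : forall p w, exists a, Dp p w -> A a /\ w <=: pp (a - thr p).
  move=> p w; have [Dw|nDw] := pselect (Dp p w).
    by have [_ [/(_ w Dw) [_ [a ha]] _]] := hDp p; exists a.
  by exists a0.
have [af' haf'] := choice (fun pw : (nat * nat) * E => hA pw.1 pw.2).
pose af p w := af' (p, w).
have haf p w : Dp p w -> A (af p w) /\ w <=: pp (af p w - thr p) := haf' (p, w).
pose B := [set a0] `|` \bigcup_(p in [set: nat * nat]) (af p @` Dp p).
exists B; split.
  move=> b [->//|[p _ [w Dw <-]]]; exact: (haf p w Dw).1.
split.
  have cU (X Y : set E) : countable X -> countable Y -> countable (X `|` Y).
    move=> cX cY.
    have -> : X `|` Y = \bigcup_(i in [set: bool]) (if i then X else Y).
      apply/seteqP; split => [z [Xz|Yz]|z [[] _ ?]]; [by exists true|by exists false|by left|by right].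
    by apply: bigcup_countable => // -[].
  apply: cU => //; apply: bigcup_countable => // p _.
  apply: (sub_countable (card_image_le _ _)); apply: ccc; exact: (hDp p).1.
split; first by move=> b [->|[p _ [w Dw <-]]]; apply: sub; [|exact: (haf p w Dw).1].
move=> u ub; apply: sl => a Aa.
have ua0 : a0 <=: u by apply: ub; left.
have wk k n : mt (pp (a - thr (k, n))) (pp (thr (k, n) - u)) = 0.
  have [[Dpos _] [_ Dmax]] := hDp (k, n).
  apply: Dmax.
  - split; first by apply: mt_ge0; apply: pp_ge0.
    by exists a; split => //; apply: mt_lbl.
  - by apply: mt_ge0; apply: pp_ge0.
  move=> d Dd; apply: vanti; last by apply: mt_ge0; [apply: mt_ge0; apply: pp_ge0|apply: Dpos].
  rewrite -(pp_disj (thr (k, n) - u)) opprB; apply: mt_mono; first exact: mt_lbr.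
  apply: vtrans (haf (k, n) d Dd).2 _; apply: pp_mono; apply: vaddr.
  by apply: ub; right; exists (k, n) => //; exists d.
suff ppau : pp (a - u) = 0 by apply: vle0_sub; rewrite -ppau; apply: pp_ge.
apply: (arch _ (s - a0)); first exact: pp_ge0.
move=> n; apply: vtrans (vnatmulS _ (pp_ge0 _)) _.
have hN : hh n *+ n.+1 = s - a0.
  by rewrite -scaler_nat /hh scalerA mulfV ?scale1r // pnatr_eq0.
rewrite -hN; apply: vnatmul.
pose z := pp (a - u - hh n).
have z0 : 0 <=: z by apply: pp_ge0.
have Xk k : mt z (pp (thr (k, n) - u)) = 0.
  elim: k => [|k IH].
    rewrite /thr /= mulr0n addr0 pp_le0; first by rewrite mtC mt_idl.
    by have := vaddr (- u) ua0; rewrite subrr.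
  apply: vanti; last by apply: mt_ge0; apply: pp_ge0.
  rewrite -IH; apply: mt_greatest; first exact: mt_lbl.
  have hz : z <=: pp (a - thr (k.+1, n)) + pp (thr (k, n) - u).
    by rewrite /z -(alg1 a (thr (k, n)) (hh n) u) /thr /= -thr_step; apply: pp_add.
  apply: vtrans (mt_mono hz (vrefl _)) _.
  apply: vtrans (mt_sub_add _ _ _) _; try exact: pp_ge0.
  by rewrite wk add0r; apply: mt_lbl.
have zs : z <=: pp (s - u).
  apply: pp_mono; apply: (vtrans (y := a - u)).
    by rewrite -{2}(subr0 (a - u)); apply: vaddl; apply: vopp.
  by apply: vaddr; apply: sub.
have zz : z = 0.
  rewrite -(mt_idl (vrefl z)); apply: vanti; last exact: mt_ge0.
  have := Xk n.+1; rewrite /thr /= hN [a0 + _]addrC subrK => <-.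
  by apply: mt_mono => //; apply: vrefl.
apply: pp_least; last exact: hh0.
by apply: vle0_sub; rewrite -zz; apply: pp_ge.
Qed.
End Riesz.

Section Topo.
Variables (R : realType) (E : topologicalLmodType R) (L : vector_lattice E).
Local Notation "x <=: y" := (vle L x y) (at level 70).
Local Notation mt := (vmeet L).

Lemma seq_subc (u : nat -> E) (y : E) : u @ \oo --> y -> (fun m => u m - y) @ \oo --> (0 : E).
Proof.
move=> uy; rewrite -(subrr y).
exact: (cvg_comp2 (h := fun a b : E => a - b) uy (cvg_cst y) (@sub_continuous E (y, y))).
Qed.

Lemma scale_small (x v : E) (A : set E) : nbhs x A ->
  exists t : R, 0 < t /\ A (x + t *: v).
Proof.
move=> xA.
have h : (fun t : R^o => x + t *: v) @ (nbhs (0:R^o)) --> x.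
  rewrite -[X in _ --> X]addr0 -[X in _ --> x + X](scale0r v).
  apply: (cvg_comp2 (h := fun a b : E => a + b) (cvg_cst x) _ (@add_continuous E (x, 0 *: v))).
  exact: (cvg_comp2 (h := fun (a : R^o) (b : E) => a *: b) (cvg_id) (cvg_cst v) (@scale_continuous R E (0, v))).
have := h _ xA; rewrite /= => /nbhs_ballP [r /= r0 hr].
exists (r / 2); split; first by rewrite divr_gt0.
apply: hr; rewrite /ball /= sub0r normrN gtr0_norm ?divr_gt0 //.
by rewrite ltr_pdivrMr // ltr_pMr // ltr1n.
Qed.

Lemma cone_closed (ls : locally_solid L) (cm : completely_metrizable R E)
  (u : nat -> E) y c : u @ \oo --> y ->
  (exists N, forall m, (N <= m)%N -> c <=: u m) -> c <=: y.
Proof.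
move=> uy [N hN].
have [dist [d0 [deq [dsym [dtri [dnb _]]]]]] := cm.
set w := pp L (c - y).
suff w0 : w = 0 by apply: vle0_sub; rewrite -w0; apply: pp_ge.
have [//|wn0] := eqVneq w 0; exfalso.
have r0 : 0 < dist 0 w.
  rewrite lt0r d0 andbT; apply/eqP => /deq h; by rewrite h eqxx in wn0.
pose U := [set z : E | dist 0 z < dist 0 w].
have nU : nbhs (0 : E) U by apply/dnb; exists (dist 0 w).
have [V [nV [sV VU]]] := ls U nU.
have := seq_subc uy nV; rewrite /= => -[M _ hM].
have hm : V (u (maxn N M) - y) by apply: hM; rewrite /= leq_maxr.
have Vw : V w.
  apply: (sV _ _ hm); rewrite abs_id; last exact: pp_ge0.
  apply: pp_least; last exact: abs_ge0.
  apply: vtrans (abs_ge _ _); apply: vaddr; apply: hN; exact: leq_maxl.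
by have := VU _ Vw; rewrite /U /= ltxx.
Qed.
End Topo.

Section WU.
Variables (R : realType) (E : topologicalLmodType R) (L : vector_lattice E).
Local Notation "x <=: y" := (vle L x y) (at level 70).
Local Notation mt := (vmeet L).

Lemma wu_exists (ls : locally_solid L) (cm : completely_metrizable R E)
  (ccc : forall D, disjoint_system L D -> countable D) : exists e, weak_unit L e.
Proof.
have [D [[Dpos Ddisj] [_ Dmax]]] := @max_disj _ _ L setT.
have /countable_injP [g ginj] := ccc D (conj Dpos Ddisj).
pose f n := match pselect (exists d, D d /\ g d = n) with
  | left h => projT1 (cid h) | right _ => 0 end.
have fD n : 0 <=: f n.
  rewrite /f; case: pselect => [h|_]; last exact: vrefl.
  by have := projT2 (cid h); move=> [/Dpos].
have Df d : D d -> exists n, f n = d.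
  move=> Dd; exists (g d); rewrite /f; case: pselect => [h|nh]; last first.
    by exfalso; apply: nh; exists d.
  have := projT2 (cid h); move=> [Dd' gd'].
  by apply: ginj; rewrite ?inE.
have [dist [d0 [deq [dsym [dtri [dnb dcomp]]]]]] := cm.
have step : forall (xn : E * nat), exists t : R, 0 < t /\ dist xn.1 (xn.1 + t *: f xn.2) < (2^-1)^+xn.2.
  move=> [x n] /=; apply: (@scale_small _ _ x (f n) [set y | dist x y < (2^-1)^+n]); apply/dnb.
  by exists ((2^-1)^+n) => //; apply: exprn_gt0; rewrite invr_gt0.
have [T hT] := choice step.
pose S := fix S n := if n is k.+1 then S k + T (S k, k) *: f k else 0.
have SS k : S k.+1 = S k + T (S k, k) *: f k by [].
have inc k : 0 <=: T (S k, k) *: f k.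
  by apply: vscale_ge0 => //; apply: ltW; exact: (hT (S k, k)).1.
have S0 k : 0 <=: S k.
  by elim: k => [|k IH]; [exact: vrefl|rewrite SS; apply: vadd_ge0].
have Smono k j : S k <=: S (k + j)%N.
  elim: j => [|j IH]; first by rewrite addn0; apply: vrefl.
  by rewrite addnS SS; apply: vtrans IH _; apply: vaddpos.
have dstep k : dist (S k) (S k.+1) < (2^-1)^+k by exact: (hT (S k, k)).2.
have dbound m j : dist (S m) (S (m + j)%N) <= 2 * (2^-1)^+m - 2 * (2^-1)^+(m + j)%N.
  elim: j => [|j IH].
    by rewrite addn0 (proj2 (deq _ _) erefl) subrr.
  apply: le_trans (dtri _ (S (m + j)%N) _) _.
  rewrite addnS exprS mulrA mulfV ?mul1r ?pnatr_eq0 //.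
  have := dstep (m + j); lra.
have cauchy : forall eps : R, 0 < eps -> exists N : nat, forall m n : nat,
    (N <= m)%N -> (N <= n)%N -> dist (S m) (S n) < eps.
  move=> eps e0.
  have hq : `|(2^-1 : R)| < 1.
    by rewrite gtr0_norm ?invr_gt0 // invf_lt1 // ltr1n.
  have := cvgr0_norm_lt _ (cvg_expr hq) (eps / 2) (divr_gt0 e0 (ltr0n R 2)).
  move=> [N _ hN]; exists N.
  have key m n : (N <= m)%N -> (m <= n)%N -> dist (S m) (S n) < eps.
    move=> Nm mn; rewrite -(subnKC mn).
    apply: le_lt_trans (dbound m (n - m)%N) _.
    have h1 : 0 <= (2^-1 : R) ^+ (m + (n - m))%N by apply: exprn_ge0; rewrite invr_ge0.
    have h2 : (2^-1 : R) ^+ m <= 2^-1 ^+ N.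
      by apply: (ler_wiXn2l _ _ Nm); [rewrite invr_ge0|rewrite invf_le1 // ler1n].
    have := hN N (leqnn N); rewrite /= ger0_norm; last by apply: exprn_ge0; rewrite invr_ge0.
    move=> h3; have : 2 * (2^-1 : R) ^+ N < eps.
      by rewrite mulrC -ltr_pdivlMr.
    lra.
  move=> m n Nm Nn; have [mn|nm] := leqP m n; first exact: key.
  by rewrite dsym; apply: key => //; apply: ltnW.
have [e Se] := dcomp S cauchy.
exists e; split.
  by apply: (cone_closed ls cm Se); exists 0%N => m _; apply: S0.
move=> x hx; apply: abs_eq0; apply: Dmax => //; first exact: abs_ge0.
move=> d Dd; have [n <-] := Df d Dd.
set t := T (S n, n).
have t0 : 0 < t by exact: (hT (S n, n)).1.
have tle : t *: f n <=: e.
  apply: (cone_closed ls cm Se); exists n.+1 => m nm.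
  rewrite -(subnKC nm); apply: vtrans (Smono _ _).
  by rewrite SS addrC; apply: vaddpos.
have h1 : mt (vabs L x) (t *: f n) = 0.
  by apply: (disj_mono (q := e)) => //; [apply: abs_ge0|apply: vscale_ge0 => //; apply: ltW].
have -> : f n = t^-1 *: (t *: f n) by rewrite scalerA mulVf ?scale1r // lt0r_neq0.
apply: disj_scale => //; [exact: abs_ge0|apply: vscale_ge0 => //; exact: ltW|by rewrite invr_gt0].
Qed.
End WU.

Unset Implicit Arguments.
Theorem theorem4p6 (R : realType) (E : topologicalLmodType R)
    (L : vector_lattice E) :
  archimedean_vl L -> locally_solid L -> completely_metrizable R E ->
  ((forall D : set E, disjoint_system L D -> countable D) <->
   ((exists e : E, weak_unit L e) /\ countable_sup_property L)).
Proof.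
move=> arch ls cm; split.
  move=> ccc; split; first exact: wu_exists.
  exact: dir_csp.
move=> [[e we] csp] D hD; exact: (dir_back arch we csp hD).
Qed.
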